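(* Let $a_1,\dots,a_5$ and $\alpha_1,\dots,\alpha_5$ be positive real numbers with $\sum_{i=1}^5\alpha_i=\pi$. Then $$\sum_{i=1}^5 a_i\cos\alpha_i\;\le\;\frac{1+\sqrt5}{4}\cdot\frac{1}{a_1a_2a_3a_4a_5}\left(a_1^2a_2^2a_3^2+a_2^2a_3^2a_4^2+a_3^2a_4^2a_5^2+a_4^2a_5^2a_1^2+a_5^2a_1^2a_2^2\right).$$ *)

(* Defs.v *)
From Stdlib Require Import Reals.

(* Main.v *)
Require Import Defs.
From Stdlib Require Import Reals Lra Psatz.
Open Scope R_scope.

Lemma key_real (c p1 p2 p3 p4 p5 : R) : 4*c*c = 2*c+1 -> 1/2 < c ->
  p1*p2+p2*p3+p3*p4+p4*p5-p5*p1 <= c*(p1^2+p2^2+p3^2+p4^2+p5^2).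
Proof.
  intros H Hc.
  set (t1 := 2*c*p1 - p2 + p5).
  set (t2 := p2 - p3 + (2*c-1)*p5).
  set (t3 := p3 - 2*c*p4 + p5).
  assert (E : 4*c*(c*(p1^2+p2^2+p3^2+p4^2+p5^2) - (p1*p2+p2*p3+p3*p4+p4*p5-p5*p1))
     = t1^2 + 2*c*t2^2 + (4*c*c-2*c)*t3^2
       + (4*c*c-2*c-1)*((-4)*c^2*p4^2 - 2*c*p5^2 + 4*c*p3*p4 + 4*c*p4*p5
                        + p2^2 + p5^2 - 2*p2*p5)).
  { unfold t1, t2, t3; ring. }
  assert (H0 : 4*c*c-2*c-1 = 0) by lra.
  rewrite H0, Rmult_0_l, Rplus_0_r in E.
  assert (0 <= t1^2 + 2*c*t2^2 + (4*c*c-2*c)*t3^2).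
  { assert (0 <= t1^2) by nra. assert (0 <= t2^2) by nra. assert (0 <= t3^2) by nra.
    assert (0 <= 4*c*c-2*c) by nra. nra. }
  nra.
Qed.

Definition cc := (1 + sqrt 5) / 4.

Lemma cc_prop : 4*cc*cc = 2*cc+1 /\ 1/2 < cc.
Proof.
  unfold cc. assert (H5 : sqrt 5 * sqrt 5 = 5) by (apply sqrt_sqrt; lra).
  assert (1 < sqrt 5).
  { rewrite <- sqrt_1. apply sqrt_lt_1; lra. }
  split; nra.
Qed.

Lemma quad (z1 z2 z3 z4 z5 t1 t2 t3 t4 t5 : R) :
  t1 + t2 + t3 + t4 + t5 = PI ->
  z1*z2*cos t1 + z2*z3*cos t2 + z3*z4*cos t3 + z4*z5*cos t4 + z5*z1*cos t5
  <= cc * (z1^2+z2^2+z3^2+z4^2+z5^2).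
Proof.
  intro Hs.
  destruct cc_prop as [Hc1 Hc2].
  set (s3 := t1 + t2). set (s4 := t1+t2+t3). set (s5 := t1+t2+t3+t4).
  assert (e1 : cos t1 = cos t1 * cos 0 + sin t1 * sin 0) by (rewrite cos_0, sin_0; ring).
  assert (e2 : cos t2 = cos s3 * cos t1 + sin s3 * sin t1).
  { rewrite <- cos_minus. unfold s3. f_equal. ring. }
  assert (e3 : cos t3 = cos s4 * cos s3 + sin s4 * sin s3).
  { rewrite <- cos_minus. unfold s3, s4. f_equal. ring. }
  assert (e4 : cos t4 = cos s5 * cos s4 + sin s5 * sin s4).
  { rewrite <- cos_minus. unfold s5, s4. f_equal. ring. }
  assert (e5 : cos t5 = - (cos s5 * cos 0 + sin s5 * sin 0)).
  { rewrite <- cos_minus. replace t5 with (PI - (s5 - 0)) by (unfold s5; lra).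
    rewrite cos_minus, cos_PI, sin_PI. ring. }
  rewrite e1, e2, e3, e4, e5.
  pose proof (key_real cc (z1*cos 0) (z2*cos t1) (z3*cos s3) (z4*cos s4) (z5 * cos s5) Hc1 Hc2) as K1.
  pose proof (key_real cc (z1*sin 0) (z2*sin t1) (z3*sin s3) (z4*sin s4) (z5 * sin s5) Hc1 Hc2) as K2.
  pose proof (sin2_cos2 0). pose proof (sin2_cos2 t1). pose proof (sin2_cos2 s3).
  pose proof (sin2_cos2 s4). pose proof (sin2_cos2 s5).
  unfold Rsqr in *.
  assert (Eq : cc * (z1^2+z2^2+z3^2+z4^2+z5^2) =
    cc * ((z1*cos 0)^2+(z2*cos t1)^2+(z3*cos s3)^2+(z4*cos s4)^2+(z5*cos s5)^2)
    + cc * ((z1*sin 0)^2+(z2*sin t1)^2+(z3*sin s3)^2+(z4*sin s4)^2+(z5*sin s5)^2)).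
  { replace (z1^2) with (z1^2 * (sin 0 * sin 0 + cos 0 * cos 0)) by (rewrite H; ring).
    replace (z2^2) with (z2^2 * (sin t1 * sin t1 + cos t1 * cos t1)) by (rewrite H0; ring).
    replace (z3^2) with (z3^2 * (sin s3 * sin s3 + cos s3 * cos s3)) by (rewrite H1; ring).
    replace (z4^2) with (z4^2 * (sin s4 * sin s4 + cos s4 * cos s4)) by (rewrite H2; ring).
    replace (z5^2) with (z5^2 * (sin s5 * sin s5 + cos s5 * cos s5)) by (rewrite H3; ring).
    ring. }
  rewrite Eq. clear Eq. lra.
Qed.

Theorem theorem2 (a1 a2 a3 a4 a5 al1 al2 al3 al4 al5 : R)
  (ha1 : 0 < a1) (ha2 : 0 < a2) (ha3 : 0 < a3) (ha4 : 0 < a4) (ha5 : 0 < a5)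
  (hal1 : 0 < al1) (hal2 : 0 < al2) (hal3 : 0 < al3) (hal4 : 0 < al4) (hal5 : 0 < al5)
  (hsum : al1 + al2 + al3 + al4 + al5 = PI) :
  a1 * cos al1 + a2 * cos al2 + a3 * cos al3 + a4 * cos al4 + a5 * cos al5
  <= (1 + sqrt 5) / 4 * (1 / (a1 * a2 * a3 * a4 * a5)) *
     (a1^2 * a2^2 * a3^2 + a2^2 * a3^2 * a4^2 + a3^2 * a4^2 * a5^2
      + a4^2 * a5^2 * a1^2 + a5^2 * a1^2 * a2^2).
Proof.
  set (T1 := a1*a2*a3/(a4*a5)). set (T2 := a2*a3*a4/(a5*a1)).
  set (T3 := a3*a4*a5/(a1*a2)). set (T4 := a4*a5*a1/(a2*a3)).
  set (T5 := a5*a1*a2/(a3*a4)).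
  assert (P1 : 0 <= T1) by (unfold T1; apply Rlt_le; apply Rdiv_lt_0_compat; repeat apply Rmult_lt_0_compat; assumption).
  assert (P2 : 0 <= T2) by (unfold T2; apply Rlt_le; apply Rdiv_lt_0_compat; repeat apply Rmult_lt_0_compat; assumption).
  assert (P3 : 0 <= T3) by (unfold T3; apply Rlt_le; apply Rdiv_lt_0_compat; repeat apply Rmult_lt_0_compat; assumption).
  assert (P4 : 0 <= T4) by (unfold T4; apply Rlt_le; apply Rdiv_lt_0_compat; repeat apply Rmult_lt_0_compat; assumption).
  assert (P5 : 0 <= T5) by (unfold T5; apply Rlt_le; apply Rdiv_lt_0_compat; repeat apply Rmult_lt_0_compat; assumption).
  assert (Hprod : forall x y a, 0 <= x -> 0 <= y -> 0 < a -> x * y = a * a -> sqrt x * sqrt y = a).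
  { intros x y a hx hy ha h. rewrite <- sqrt_mult by lra. rewrite h. apply sqrt_square; lra. }
  assert (Q1 : sqrt T1 * sqrt T4 = a1) by (apply Hprod; auto; unfold T1, T4; field; lra).
  assert (Q4 : sqrt T4 * sqrt T2 = a4) by (apply Hprod; auto; unfold T2, T4; field; lra).
  assert (Q2 : sqrt T2 * sqrt T5 = a2) by (apply Hprod; auto; unfold T2, T5; field; lra).
  assert (Q5 : sqrt T5 * sqrt T3 = a5) by (apply Hprod; auto; unfold T3, T5; field; lra).
  assert (Q3 : sqrt T3 * sqrt T1 = a3) by (apply Hprod; auto; unfold T1, T3; field; lra).
  pose proof (quad (sqrt T1) (sqrt T4) (sqrt T2) (sqrt T5) (sqrt T3) al1 al4 al2 al5 al3
    ltac:(lra)) as K.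
  rewrite Q1, Q4, Q2, Q5, Q3 in K.
  rewrite !pow2_sqrt in K by assumption.
  assert (E : cc * (T1 + T4 + T2 + T5 + T3) =
     (1 + sqrt 5) / 4 * (1 / (a1 * a2 * a3 * a4 * a5)) *
     (a1^2 * a2^2 * a3^2 + a2^2 * a3^2 * a4^2 + a3^2 * a4^2 * a5^2
      + a4^2 * a5^2 * a1^2 + a5^2 * a1^2 * a2^2)).
  { unfold cc, T1, T2, T3, T4, T5. field. repeat split; lra. }
  lra.
Qed.
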